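(* Let $G=\langle\alpha,\beta\mid\alpha^2=\beta^3=e\rangle$. The space $\mathrm{Hom}(G,\mathrm{Homeo}_+(S^1))$ is locally path-connected; more precisely, every neighbourhood of every point contains a path-connected neighbourhood of that point.
   Context: $\mathrm{Homeo}_+(S^1)$ carries the $C^0$ (uniform) topology. $\mathrm{Hom}(G,\mathrm{Homeo}_+(S^1))$ is identified with the set of pairs $(\psi(\alpha),\psi(\beta))$ of orientation-preserving homeomorphisms with $\psi(\alpha)^2=\mathrm{id}$ and $\psi(\beta)^3=\mathrm{id}$, with the topology of uniform convergence of $\psi(\alpha)$ and $\psi(\beta)^{\pm1}$. *)

(* Defs.v *)
From Stdlib Require Import Reals Lra.
Open Scope R_scope.

(** The circle S^1 = R/Z, represented by the fundamental domain [0,1). *)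
Definition S1 : Type := { x : R | 0 <= x < 1 }.

Lemma frac_part_range (x : R) : 0 <= frac_part x < 1.
Proof.
  unfold frac_part. destruct (base_Int_part x) as [H1 H2]. lra.
Qed.

Definition proj (x : R) : S1 := exist _ (frac_part x) (frac_part_range x).

Definition cdist (x y : S1) : R :=
  let t := frac_part (proj1_sig x - proj1_sig y) in Rmin t (1 - t).

Definition circ_continuous (f : S1 -> S1) : Prop :=
  forall x eps, 0 < eps -> exists delta, 0 < delta /\
    forall y, cdist x y < delta -> cdist (f x) (f y) < eps.

Definition is_homeo (f : S1 -> S1) : Prop :=
  circ_continuous f /\
  exists g : S1 -> S1,
    (forall x, g (f x) = x) /\ (forall y, f (g y) = y) /\ circ_continuous g.

Definition orientation_preserving (f : S1 -> S1) : Prop :=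
  exists F : R -> R,
    continuity F /\
    (forall x y, x < y -> F x < F y) /\
    (forall x, F (x + 1) = F x + 1) /\
    (forall x, proj (F x) = f (proj x)).

Definition homeo_plus (f : S1 -> S1) : Prop :=
  is_homeo f /\ orientation_preserving f.

(** A homomorphism psi : G -> Homeo_+(S^1), G = <a, b | a^2 = b^3 = e>,
    is identified with the pair (psi(a), psi(b)). *)
Definition Rep : Type := ((S1 -> S1) * (S1 -> S1))%type.

Definition in_Hom (p : Rep) : Prop :=
  homeo_plus (fst p) /\ homeo_plus (snd p) /\
  (forall x, fst p (fst p x) = x) /\
  (forall x, snd p (snd p (snd p x)) = x).

(** psi(b)^{-1} = psi(b)^2 since psi(b)^3 = id. *)
Definition binv (p : Rep) (x : S1) : S1 := snd p (snd p x).

(** Basic uniform neighbourhoods: psi(a), psi(b), psi(b)^{-1} are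
    uniformly eps-close. *)
Definition near (eps : R) (p q : Rep) : Prop :=
  forall x,
    cdist (fst p x) (fst q x) < eps /\
    cdist (snd p x) (snd q x) < eps /\
    cdist (binv p x) (binv q x) < eps.

Definition is_nbhd (N : Rep -> Prop) (p : Rep) : Prop :=
  exists eps, 0 < eps /\ forall q, in_Hom q -> near eps p q -> N q.

Definition path_continuous (g : R -> Rep) : Prop :=
  forall t, 0 <= t <= 1 -> forall eps, 0 < eps -> exists delta, 0 < delta /\
    forall s, 0 <= s <= 1 -> Rabs (s - t) < delta -> near eps (g t) (g s).

Definition path_connected (V : Rep -> Prop) : Prop :=
  forall p q, V p -> V q -> exists g : R -> Rep,
    path_continuous g /\ g 0 = p /\ g 1 = q /\
    (forall t, 0 <= t <= 1 -> V (g t)).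

(* Main.v *)
Require Import Defs.
From Stdlib Require Import Reals Lra Lia ZArith ProofIrrelevance ClassicalEpsilon FunctionalExtensionality.
Open Scope R_scope.

Lemma S1_eq (a b : S1) : proj1_sig a = proj1_sig b -> a = b.
Proof.
  destruct a as [a Ha], b as [b Hb]; simpl; intros ->.
  f_equal; apply proof_irrelevance.
Qed.

Lemma up_shift (u : R) (z : Z) : up (u + IZR z) = (up u + z)%Z.
Proof.
  destruct (archimed u) as [H1 H2].
  symmetry; apply tech_up; rewrite plus_IZR; lra.
Qed.

Lemma Int_part_shift (u : R) (z : Z) : Int_part (u + IZR z) = (Int_part u + z)%Z.
Proof. unfold Int_part; rewrite up_shift; lia. Qed.

Lemma frac_shift (u : R) (z : Z) : frac_part (u + IZR z) = frac_part u.
Proof. unfold frac_part; rewrite Int_part_shift, plus_IZR; ring. Qed.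

Lemma proj_shift (u : R) (z : Z) : proj (u + IZR z) = proj u.
Proof. apply S1_eq; simpl; apply frac_shift. Qed.

Lemma frac_unit (y : R) : 0 <= y < 1 -> frac_part y = y.
Proof.
  intros H. unfold frac_part, Int_part.
  assert (up y = 1%Z) as ->. { symmetry; apply tech_up; simpl; lra. }
  simpl; ring.
Qed.

Lemma proj_val (s : S1) : proj (proj1_sig s) = s.
Proof. apply S1_eq; simpl; apply frac_unit; exact (proj2_sig s). Qed.

Lemma frac_def (u : R) : u = frac_part u + IZR (Int_part u).
Proof. unfold frac_part; ring. Qed.

Lemma proj_eq_int (u v : R) : proj u = proj v -> exists z, u - v = IZR z.
Proof.
  intros H. assert (frac_part u = frac_part v) as E.
  { change (proj1_sig (proj u) = proj1_sig (proj v)); rewrite H; reflexivity. }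
  exists (Int_part u - Int_part v)%Z. rewrite minus_IZR.
  rewrite (frac_def u), (frac_def v) at 1. rewrite E. ring.
Qed.

Lemma Int_part_nonneg (d : R) : 0 <= d -> (0 <= Int_part d)%Z.
Proof.
  intros H. destruct (base_Int_part d) as [H1 H2].
  assert (-1 < IZR (Int_part d)) by lra.
  apply lt_IZR in H0. lia.
Qed.

Lemma Int_part_neg (d : R) : d < 0 -> (Int_part d <= -1)%Z.
Proof.
  intros H. destruct (base_Int_part d) as [H1 H2].
  assert (IZR (Int_part d) < 0) by lra.
  apply lt_IZR in H0. lia.
Qed.

Lemma cdist_proj_le (a b : R) : cdist (proj a) (proj b) <= Rabs (a - b).
Proof.
  unfold cdist; simpl.
  assert (frac_part (frac_part a - frac_part b) = frac_part (a - b)) as ->.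
  { replace (frac_part a - frac_part b) with ((a - b) + IZR (Int_part b - Int_part a)).
    apply frac_shift. rewrite minus_IZR. rewrite (frac_def a), (frac_def b) at 1. ring. }
  set (d := a - b).
  destruct (Rle_or_lt 0 d) as [Hd|Hd].
  - apply Int_part_nonneg in Hd as HI. apply IZR_le in HI.
    unfold frac_part. rewrite Rabs_right by lra.
    eapply Rle_trans; [apply Rmin_l|]. lra.
  - apply Int_part_neg in Hd as HI. apply IZR_le in HI.
    unfold frac_part. rewrite Rabs_left by lra.
    eapply Rle_trans; [apply Rmin_r|]. lra.
Qed.

Lemma cdist_small (x y : S1) (d : R) :
  cdist x y < d -> exists u, proj u = y /\ Rabs (u - proj1_sig x) < d.
Proof.
  unfold cdist. set (t := frac_part (proj1_sig x - proj1_sig y)).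
  assert (Ht : 0 <= t < 1) by apply frac_part_range.
  assert (Et : proj1_sig x - proj1_sig y = t + IZR (Int_part (proj1_sig x - proj1_sig y)))
    by apply frac_def.
  set (I := Int_part (proj1_sig x - proj1_sig y)) in *.
  apply Rmin_case_strong; intros _ Hlt.
  - exists (proj1_sig y + IZR I). split.
    + rewrite proj_shift; apply proj_val.
    + rewrite Rabs_left1; lra.
  - exists (proj1_sig y + IZR (I + 1)). split.
    + rewrite proj_shift; apply proj_val.
    + rewrite plus_IZR. rewrite Rabs_right; lra.
Qed.

Definition ucont (f : R -> R) : Prop :=
  forall eps, 0 < eps -> exists d, 0 < d /\ forall x y, Rabs (x - y) < d -> Rabs (f x - f y) < eps.

Definition pcont (f : R -> R) : Prop :=
  forall x eps, 0 < eps -> exists d, 0 < d /\ forall y, Rabs (y - x) < d -> Rabs (f y - f x) < eps.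

Lemma pcont_continuity f : pcont f -> continuity f.
Proof.
  intros H x eps Heps. destruct (H x eps Heps) as [d [Hd Hy]].
  exists d; split; [lra|]. intros y [_ Hyd]. simpl in *. unfold R_dist in *. auto.
Qed.

Lemma continuity_pcont f : continuity f -> pcont f.
Proof.
  intros H x eps Heps. destruct (H x eps Heps) as [d [Hd Hy]].
  exists d; split; [lra|]. intros y Hyx.
  destruct (Req_dec y x) as [->|Hne].
  - rewrite Rminus_diag, Rabs_R0; lra.
  - apply (Hy y). split. split; [exact I| auto]. exact Hyx.
Qed.

Lemma ucont_pcont f : ucont f -> pcont f.
Proof.
  intros H x eps Heps. destruct (H eps Heps) as [d [Hd Hy]]. exists d; split; auto.
Qed.

Lemma ucont_continuity f : ucont f -> continuity f.
Proof. intros; apply pcont_continuity, ucont_pcont; auto. Qed.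

Definition transl (L : R -> R) : Prop := forall x, L (x + 1) = L x + 1.
Definition incr (L : R -> R) : Prop := forall x y, x < y -> L x < L y.

Lemma transl_nat L : transl L -> forall (n : nat) x, L (x + INR n) = L x + INR n.
Proof.
  intros H n; induction n; intros x.
  - simpl; rewrite !Rplus_0_r; reflexivity.
  - rewrite S_INR. replace (x + (INR n + 1)) with ((x + INR n) + 1) by ring.
    rewrite H, IHn; ring.
Qed.

Lemma transl_int L : transl L -> forall (z : Z) x, L (x + IZR z) = L x + IZR z.
Proof.
  intros H z x. destruct (Z_le_gt_dec 0 z) as [Hz|Hz].
  - rewrite <- (Z2Nat.id z Hz), <- INR_IZR_INZ. apply transl_nat; auto.
  - assert (E : IZR z = - INR (Z.to_nat (- z))).
    { rewrite INR_IZR_INZ, Z2Nat.id by lia. rewrite opp_IZR; ring. }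
    rewrite E. pose proof (transl_nat L H (Z.to_nat (-z)) (x - INR (Z.to_nat (- z)))) as T.
    replace (x - INR (Z.to_nat (- z)) + INR (Z.to_nat (- z))) with x in T by ring.
    replace (x + - INR (Z.to_nat (- z))) with (x - INR (Z.to_nat (- z))) by ring. lra.
Qed.

Lemma periodic_ucont f : continuity f -> transl f -> ucont f.
Proof.
  intros Hc Ht eps Heps.
  destruct (@Heine_cor2 f (-1) 2 (fun x _ => Hc x) (mkposreal eps Heps)) as [[d Hd] Hu].
  simpl in Hu. exists (Rmin d 1). split. { apply Rmin_glb_lt; lra. }
  intros x y Hxy.
  set (z := Int_part x).
  destruct (base_Int_part x) as [B1 B2]. fold z in B1, B2.
  assert (Hm1 : Rmin d 1 <= 1) by apply Rmin_r.
  assert (Hm2 : Rmin d 1 <= d) by apply Rmin_l.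
  apply Rabs_def2 in Hxy as [Hxy1 Hxy2].
  pose proof (transl_int f Ht z (x - IZR z)) as E1.
  pose proof (transl_int f Ht z (y - IZR z)) as E2.
  replace (x - IZR z + IZR z) with x in E1 by ring.
  replace (y - IZR z + IZR z) with y in E2 by ring.
  rewrite E1, E2. replace (f (x - IZR z) + IZR z - (f (y - IZR z) + IZR z))
    with (f (x - IZR z) - f (y - IZR z)) by ring.
  apply Hu; try lra. apply Rabs_def1; lra.
Qed.

Lemma ucont_comp f g : ucont f -> ucont g -> ucont (fun x => f (g x)).
Proof.
  intros Hf Hg eps Heps. destruct (Hf eps Heps) as [d1 [Hd1 H1]].
  destruct (Hg d1 Hd1) as [d2 [Hd2 H2]]. exists d2; split; auto.
Qed.

Lemma ucont_lin f g a b : ucont f -> ucont g -> ucont (fun x => a * f x + b * g x).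
Proof.
  intros Hf Hg eps Heps.
  set (e := eps / (2 * (Rabs a + Rabs b + 1))).
  assert (He : 0 < e). { unfold e. apply Rdiv_lt_0_compat; [lra|]. pose proof (Rabs_pos a); pose proof (Rabs_pos b); lra. }
  destruct (Hf e He) as [d1 [Hd1 H1]]. destruct (Hg e He) as [d2 [Hd2 H2]].
  exists (Rmin d1 d2). split. { apply Rmin_glb_lt; lra. }
  intros x y Hxy.
  assert (A1 := H1 x y (Rlt_le_trans _ _ _ Hxy (Rmin_l _ _))).
  assert (A2 := H2 x y (Rlt_le_trans _ _ _ Hxy (Rmin_r _ _))).
  replace (a * f x + b * g x - (a * f y + b * g y)) with (a * (f x - f y) + b * (g x - g y)) by ring.
  eapply Rle_lt_trans; [apply Rabs_triang|]. rewrite !Rabs_mult.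
  assert (Rabs a * Rabs (f x - f y) <= Rabs a * e) by (apply Rmult_le_compat_l; [apply Rabs_pos| lra]).
  assert (Rabs b * Rabs (g x - g y) <= Rabs b * e) by (apply Rmult_le_compat_l; [apply Rabs_pos| lra]).
  assert ((Rabs a + Rabs b) * e < eps).
  { unfold e. pose proof (Rabs_pos a); pose proof (Rabs_pos b).
    apply (Rmult_lt_reg_r (2 * (Rabs a + Rabs b + 1))); [lra|].
    field_simplify; [|lra]. nra. }
  nra.
Qed.

Lemma ucont_id : ucont (fun x => x).
Proof. intros eps H; exists eps; split; auto. Qed.

Lemma ucont_const c : ucont (fun _ => c).
Proof. intros eps H; exists 1; split; [lra|]. intros; rewrite Rminus_diag, Rabs_R0; auto. Qed.

Definition liftu (L : R -> R) : Prop := ucont L /\ incr L /\ transl L.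

Lemma liftu_of L : continuity L -> incr L -> transl L -> liftu L.
Proof. intros; split; [apply periodic_ucont|]; auto. Qed.

Lemma IVT2 (h : R -> R) a b : continuity h -> h a * h b <= 0 -> exists w, h w = 0.
Proof.
  intros Hc Hab. destruct (Rle_or_lt a b).
  - destruct (IVT_cor h a b Hc H Hab) as [w [_ Hw]]; eauto.
  - destruct (IVT_cor h b a Hc (Rlt_le _ _ H)) as [w [_ Hw]]; [lra|eauto].
Qed.

Lemma liftu_surj L : liftu L -> forall y, exists x, L x = y.
Proof.
  intros [Hu [Hi Ht]] y.
  destruct (archimed (Rabs (y - L 0))) as [A _].
  set (n := up (Rabs (y - L 0))) in *.
  pose proof (transl_int L Ht n 0) as E1. pose proof (transl_int L Ht (- n) 0) as E2.
  rewrite opp_IZR in E2. rewrite Rplus_0_l in E1, E2.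
  pose proof (Rabs_def2 (y - L 0) (IZR n)) as B.
  assert (Rabs (y - L 0) < IZR n) as B' by lra. apply B in B'.
  destruct (IVT2 (fun x => L x - y) (- IZR n) (IZR n)) as [w Hw].
  - apply continuity_minus. apply ucont_continuity; auto. intros x; apply continuity_const. intros ? ?; reflexivity.
  - rewrite E1, E2. nra.
  - exists w; lra.
Qed.

Definition inv (L : R -> R) (y : R) : R := epsilon (inhabits 0) (fun x => L x = y).

Lemma inv_r L : liftu L -> forall y, L (inv L y) = y.
Proof. intros H y. unfold inv. apply (epsilon_spec (inhabits 0) (fun x => L x = y)). apply liftu_surj; auto. Qed.

Lemma incr_inj L : incr L -> forall x y, L x = L y -> x = y.
Proof.
  intros H x y E. destruct (Rtotal_order x y) as [h|[h|h]]; auto;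
  apply H in h; lra.
Qed.

Lemma incr_le L : incr L -> forall x y, L x <= L y -> x <= y.
Proof. intros H x y E. destruct (Rle_or_lt x y); auto. apply H in H0; lra. Qed.

Lemma inv_l L : liftu L -> forall x, inv L (L x) = x.
Proof. intros H x. apply (incr_inj L (proj1 (proj2 H))). apply inv_r; auto. Qed.

Lemma inv_liftu L : liftu L -> liftu (inv L).
Proof.
  intros HL. destruct HL as [Hu [Hi Ht]] eqn:EH.
  assert (Hinc : incr (inv L)).
  { intros a b Hab. destruct (Rle_or_lt (inv L b) (inv L a)) as [h|h]; auto.
    exfalso. assert (L (inv L b) <= L (inv L a)).
    { destruct (Req_dec (inv L b) (inv L a)) as [->|]; [lra|]. apply Rlt_le, Hi; lra. }
    rewrite !inv_r in H by auto. lra. }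
  assert (Htr : transl (inv L)).
  { intros y. rewrite <- (inv_r L HL y) at 1. rewrite <- Ht. apply inv_l; auto. }
  apply liftu_of; auto. apply pcont_continuity.
  intros y eps Heps. set (x0 := inv L y).
  assert (H1 : L (x0 - eps) < y). { rewrite <- (inv_r L HL y). apply Hi; unfold x0; lra. }
  assert (H2 : y < L (x0 + eps)). { rewrite <- (inv_r L HL y) at 1. apply Hi; unfold x0; lra. }
  exists (Rmin (y - L (x0 - eps)) (L (x0 + eps) - y)). split. { apply Rmin_glb_lt; lra. }
  intros z Hz. apply Rabs_def2 in Hz as [Hz1 Hz2].
  pose proof (Rmin_l (y - L (x0 - eps)) (L (x0 + eps) - y)).
  pose proof (Rmin_r (y - L (x0 - eps)) (L (x0 + eps) - y)).
  assert (inv L (L (x0 - eps)) < inv L z) by (apply Hinc; lra).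
  assert (inv L z < inv L (L (x0 + eps))) by (apply Hinc; lra).
  rewrite !inv_l in * by auto. apply Rabs_def1; fold x0; lra.
Qed.

Lemma liftu_comp L M : liftu L -> liftu M -> liftu (fun x => L (M x)).
Proof.
  intros [Hu [Hi Ht]] [Hu' [Hi' Ht']]. split; [|split].
  - apply ucont_comp; auto.
  - intros x y h; auto.
  - intros x; simpl. rewrite Ht', Ht; auto.
Qed.

Lemma liftu_shift L c : liftu L -> liftu (fun x => L x + c).
Proof.
  intros [Hu [Hi Ht]]. split; [|split].
  - replace (fun x => L x + c) with (fun x => 1 * L x + c * (fun _ => 1) x).
    apply ucont_lin; auto; apply ucont_const. apply functional_extensionality; intros; simpl; ring.
  - intros x y h. apply Hi in h; lra.
  - intros x. rewrite Ht; ring.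
Qed.

Lemma liftu_lin H0 H1 t : liftu H0 -> liftu H1 -> 0 <= t <= 1 ->
  liftu (fun x => (1 - t) * H0 x + t * H1 x).
Proof.
  intros [Hu [Hi Ht]] [Hu' [Hi' Ht']] Htt. split; [|split].
  - apply ucont_lin; auto.
  - intros x y h. pose proof (Hi x y h); pose proof (Hi' x y h).
    destruct (Req_dec t 1) as [->|Hne]; [lra|].
    assert (0 < (1 - t) * (H0 y - H0 x)) by (apply Rmult_lt_0_compat; lra).
    assert (0 <= t * (H1 y - H1 x)) by (apply Rmult_le_pos; lra). nra.
  - intros x. rewrite Ht, Ht'; ring.
Qed.

Definition conjL (H : R -> R) (r : R) (x : R) : R := inv H (H x + r).

Lemma conjL_liftu H r : liftu H -> liftu (conjL H r).
Proof.
  intros HH. unfold conjL. apply (liftu_comp (inv H) (fun x => H x + r)).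
  apply inv_liftu; auto. apply liftu_shift; auto.
Qed.

Definition desc (L : R -> R) (s : S1) : S1 := proj (L (proj1_sig s)).

Lemma desc_proj L : transl L -> forall x, desc L (proj x) = proj (L x).
Proof.
  intros Ht x. unfold desc; simpl. unfold frac_part.
  replace (x - IZR (Int_part x)) with (x + IZR (- Int_part x)) by (rewrite opp_IZR; ring).
  rewrite transl_int by auto. apply proj_shift.
Qed.

Lemma desc_comp L M : transl L -> forall s, desc L (desc M s) = desc (fun x => L (M x)) s.
Proof. intros Ht s. unfold desc at 2. rewrite desc_proj by auto. reflexivity. Qed.

Lemma desc_id s : desc (fun x => x) s = s.
Proof. apply proj_val. Qed.

Lemma desc_int_shift (z : Z) s : desc (fun x => x + IZR z) s = s.
Proof. unfold desc. rewrite proj_shift. apply proj_val. Qed.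

Lemma desc_close L M e : (forall x, Rabs (L x - M x) < e) -> forall s, cdist (desc L s) (desc M s) < e.
Proof. intros H s. unfold desc. eapply Rle_lt_trans; [apply cdist_proj_le| apply H]. Qed.

Lemma desc_cont L : ucont L -> transl L -> circ_continuous (desc L).
Proof.
  intros Hu Ht s eps Heps. destruct (Hu eps Heps) as [d [Hd Hl]].
  exists d; split; auto. intros y Hy. destruct (cdist_small s y d Hy) as [u [<- Hu']].
  rewrite desc_proj by auto. unfold desc. eapply Rle_lt_trans; [apply cdist_proj_le|].
  rewrite Rabs_minus_sym. apply Hl; auto.
Qed.

Lemma desc_homeo_plus L : liftu L -> homeo_plus (desc L).
Proof.
  intros HL. pose proof (inv_liftu L HL) as HI.
  destruct HL as [Hu [Hi Ht]] eqn:EL. destruct HI as [Hu' [Hi' Ht']].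
  split; [split|].
  - apply desc_cont; auto.
  - exists (desc (inv L)). split; [|split].
    + intros x. rewrite desc_comp by auto.
      replace (fun x => inv L (L x)) with (fun x : R => x). apply desc_id.
      apply functional_extensionality; intros; rewrite inv_l; auto.
    + intros x. rewrite desc_comp by auto.
      replace (fun x => L (inv L x)) with (fun x : R => x). apply desc_id.
      apply functional_extensionality; intros; rewrite inv_r; auto.
    + apply desc_cont; auto.
  - exists L. split; [apply ucont_continuity; auto|]. split; [auto|]. split; [auto|].
    intros x; rewrite desc_proj; auto.
Qed.

Definition itr {A} (F : A -> A) (n : nat) (x : A) : A := Nat.iter n F x.

Lemma itr_S {A} (F : A -> A) n x : itr F (S n) x = F (itr F n x).
Proof. reflexivity. Qed.

Lemma itr_S_r {A} (F : A -> A) n x : itr F (S n) x = itr F n (F x).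
Proof. unfold itr; apply Nat.iter_succ_r. Qed.

Lemma liftu_itr F n : liftu F -> liftu (itr F n).
Proof.
  intros HF. induction n.
  - split; [apply ucont_id|split]; [intros x y h; exact h| intros x; reflexivity].
  - change (liftu (fun x => F (itr F n x))). apply liftu_comp; auto.
Qed.

Lemma desc_itr F n : liftu F -> forall s, itr (desc F) n s = desc (itr F n) s.
Proof.
  intros HF. induction n; intros s.
  - simpl. symmetry; apply desc_id.
  - rewrite itr_S, IHn. rewrite desc_comp by (apply HF). reflexivity.
Qed.

Lemma itr_close F : ucont F -> forall j eps, 0 < eps -> exists d, 0 < d /\
  forall G, (forall x, Rabs (G x - F x) < d) -> forall x, Rabs (itr G j x - itr F j x) < eps.
Proof.
  intros HF j. induction j; intros eps Heps.
  - exists 1; split; [lra|]. intros; simpl. rewrite Rminus_diag, Rabs_R0; auto.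
  - destruct (HF (eps/2)) as [d1 [Hd1 H1]]; [lra|].
    destruct (IHj d1 Hd1) as [d2 [Hd2 H2]].
    exists (Rmin (eps/2) d2). split. { apply Rmin_glb_lt; lra. }
    intros G HG x. rewrite !itr_S.
    assert (A1 := HG (itr G j x)).
    assert (A2 : Rabs (itr G j x - itr F j x) < d1).
    { apply H2; intros y; eapply Rlt_le_trans; [apply HG| apply Rmin_r]. }
    apply H1 in A2.
    pose proof (Rmin_l (eps/2) d2).
    replace (G (itr G j x) - F (itr F j x)) with ((G (itr G j x) - F (itr G j x)) + (F (itr G j x) - F (itr F j x))) by ring.
    eapply Rle_lt_trans; [apply Rabs_triang|]. lra.
Qed.

Lemma itr_close_all F : ucont F -> forall m eps, 0 < eps -> exists d, 0 < d /\
  forall G, (forall x, Rabs (G x - F x) < d) -> forall j x, (j <= m)%nat -> Rabs (itr G j x - itr F j x) < eps.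
Proof.
  intros HF m. induction m; intros eps Heps.
  - exists 1; split; [lra|]. intros G _ j x Hj. assert (j = 0%nat) as -> by lia. simpl. rewrite Rminus_diag, Rabs_R0; auto.
  - destruct (IHm eps Heps) as [d1 [Hd1 H1]]. destruct (itr_close F HF (S m) eps Heps) as [d2 [Hd2 H2]].
    exists (Rmin d1 d2). split. { apply Rmin_glb_lt; lra. }
    intros G HG j x Hj. destruct (Nat.eq_dec j (S m)) as [->|Hne].
    + apply H2. intros y; eapply Rlt_le_trans; [apply HG| apply Rmin_r].
    + apply H1; [|lia]. intros y; eapply Rlt_le_trans; [apply HG| apply Rmin_l].
Qed.

Fixpoint Sm (F : R -> R) (m : nat) (x : R) : R :=
  match m with O => 0 | S m' => x + Sm F m' (F x) end.

Lemma Sm_S_r F m x : Sm F (S m) x = Sm F m x + itr F m x.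
Proof.
  revert x; induction m; intros x.
  - simpl; ring.
  - change (Sm F (S (S m)) x) with (x + Sm F (S m) (F x)). rewrite IHm.
    change (Sm F (S m) x) with (x + Sm F m (F x)). rewrite (itr_S_r F m x). ring.
Qed.

Lemma Sm_close F : ucont F -> forall m eps, 0 < eps -> exists d, 0 < d /\
  forall G, (forall x, Rabs (G x - F x) < d) -> forall x, Rabs (Sm G m x - Sm F m x) < eps.
Proof.
  intros HF m. induction m; intros eps Heps.
  - exists 1; split; [lra|]. intros; simpl. rewrite Rminus_diag, Rabs_R0; auto.
  - destruct (IHm (eps/2)) as [d1 [Hd1 H1]]; [lra|].
    destruct (itr_close F HF m (eps/2)) as [d2 [Hd2 H2]]; [lra|].
    exists (Rmin d1 d2). split. { apply Rmin_glb_lt; lra. }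
    intros G HG x. rewrite !Sm_S_r.
    assert (A1 : Rabs (Sm G m x - Sm F m x) < eps/2).
    { apply H1; intros y; eapply Rlt_le_trans; [apply HG| apply Rmin_l]. }
    assert (A2 : Rabs (itr G m x - itr F m x) < eps/2).
    { apply H2; intros y; eapply Rlt_le_trans; [apply HG| apply Rmin_r]. }
    replace (Sm G m x + itr G m x - (Sm F m x + itr F m x)) with ((Sm G m x - Sm F m x) + (itr G m x - itr F m x)) by ring.
    eapply Rle_lt_trans; [apply Rabs_triang|]. lra.
Qed.

Lemma Sm_props F : liftu F -> forall m,
  ucont (Sm F m) /\ (forall x y, x <= y -> Sm F m x <= Sm F m y) /\
  (forall x, Sm F m (x + 1) = Sm F m x + INR m).
Proof.
  intros [Hu [Hi Ht]] m. induction m as [|m [U [I T]]].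
  - split; [apply ucont_const|split]; intros; simpl; lra.
  - split; [|split].
    + simpl. replace (fun x => x + Sm F m (F x)) with (fun x => 1 * x + 1 * (fun y => Sm F m (F y)) x).
      apply ucont_lin; [apply ucont_id| apply ucont_comp; auto].
      apply functional_extensionality; intros; ring.
    + intros x y h. simpl. assert (F x <= F y).
      { destruct (Req_dec x y) as [->|]; [lra|]. apply Rlt_le, Hi; lra. }
      apply I in H. lra.
    + intros x. cbn [Sm]. rewrite Ht, T, S_INR. ring.
Qed.

Definition avg (F : R -> R) (n : nat) (x : R) : R := Sm F n x / INR n.

Lemma avg_liftu F n : liftu F -> (1 <= n)%nat -> liftu (avg F n).
Proof.
  intros HF Hn. pose proof (Sm_props F HF n) as [U [I T]].
  assert (Hn' : 0 < INR n) by (apply lt_0_INR; lia).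
  split; [|split].
  - unfold avg. replace (fun x => Sm F n x / INR n) with (fun x => / INR n * Sm F n x + 0 * (fun _ => 0) x).
    apply ucont_lin; auto; apply ucont_const.
    apply functional_extensionality; intros; unfold Rdiv; ring.
  - intros x y h. unfold avg. destruct n as [|n]; [lia|].
    rewrite !Sm_S_r.
    assert (itr F n x < itr F n y) by (apply (proj1 (proj2 (liftu_itr F n HF))); auto).
    assert (Sm F n x <= Sm F n y) by (apply (proj1 (proj2 (Sm_props F HF n))); lra).
    apply Rmult_lt_compat_r; [apply Rinv_0_lt_compat; auto| lra].
  - intros x. unfold avg. rewrite T. field. lra.
Qed.

Lemma no_int_half (z a : Z) : IZR z = IZR a + 1/2 -> False.
Proof.
  intros H. assert (IZR a < IZR z) by lra. assert (IZR z < IZR (a + 1)) by (rewrite plus_IZR; lra).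
  apply lt_IZR in H0; apply lt_IZR in H1. lia.
Qed.

Lemma no_int_mhalf (z a : Z) : IZR z = IZR a - 1/2 -> False.
Proof.
  intros H. assert (IZR z < IZR a) by lra. assert (IZR (a - 1) < IZR z) by (rewrite minus_IZR; lra).
  apply lt_IZR in H0; apply lt_IZR in H1. lia.
Qed.

Lemma int_const (d : R -> R) : continuity d -> (forall x, exists z, d x = IZR z) -> forall x, d x = d 0.
Proof.
  intros Hc Hz x. destruct (Hz x) as [z1 E1]. destruct (Hz 0) as [z0 E0].
  destruct (Z.lt_total z0 z1) as [h|[h|h]].
  - exfalso. apply IZR_lt in h. assert (IZR z0 + 1 <= IZR z1).
    { rewrite <- plus_IZR. apply IZR_le. apply lt_IZR in h. lia. }
    destruct (IVT2 (fun y => d y - (IZR z0 + 1/2)) 0 x) as [w Hw].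
    + apply continuity_minus; auto. intros y; apply continuity_const; intros ? ?; reflexivity.
    + rewrite E0, E1. nra.
    + destruct (Hz w) as [zw Ew]. apply (no_int_half zw z0). lra.
  - subst; lra.
  - exfalso. apply IZR_lt in h. assert (IZR z1 + 1 <= IZR z0).
    { rewrite <- plus_IZR. apply IZR_le. apply lt_IZR in h. lia. }
    destruct (IVT2 (fun y => d y - (IZR z0 - 1/2)) 0 x) as [w Hw].
    + apply continuity_minus; auto. intros y; apply continuity_const; intros ? ?; reflexivity.
    + rewrite E0, E1. nra.
    + destruct (Hz w) as [zw Ew]. apply (no_int_mhalf zw z0). lra.
Qed.

Lemma avg_fix F n k : (1 <= n)%nat -> (forall x, itr F n x = x + k) ->
  forall x, avg F n (F x) = avg F n x + k / INR n.
Proof.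
  intros Hn Hk x. unfold avg.
  assert (Sm F n (F x) = Sm F n x + k).
  { pose proof (Sm_S_r F n x) as E. change (Sm F (S n) x) with (x + Sm F n (F x)) in E.
    rewrite Hk in E. lra. }
  rewrite H. field. apply not_0_INR; lia.
Qed.

Lemma conjL_close K r : liftu K -> forall rho, 0 < rho -> exists eta, 0 < eta /\
  forall H, liftu H -> (forall x, Rabs (H x - K x) < eta) ->
  forall x, Rabs (conjL H r x - conjL K r x) < rho.
Proof.
  intros HK rho Hrho. destruct (inv_liftu K HK) as [Hu _].
  destruct (Hu rho Hrho) as [d [Hd Hi]].
  exists (d/2). split; [lra|]. intros H HH Hc x. unfold conjL.
  set (y := inv H (H x + r)).
  assert (Ey : H y = H x + r) by (apply inv_r; auto).
  rewrite <- (inv_l K HK y). apply Hi.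
  pose proof (Hc y); pose proof (Hc x).
  apply Rabs_def2 in H0; apply Rabs_def2 in H1. apply Rabs_def1; lra.
Qed.

Lemma itr_conjL H r : liftu H -> forall m x, itr (conjL H r) m x = inv H (H x + INR m * r).
Proof.
  intros HH m. induction m; intros x.
  - simpl. rewrite Rmult_0_l, Rplus_0_r, inv_l; auto.
  - rewrite itr_S, IHm. unfold conjL. rewrite inv_r by auto. rewrite S_INR. f_equal. ring.
Qed.

Lemma normalize F G f g d : liftu F -> liftu G -> (forall x, proj (F x) = f (proj x)) ->
  (forall x, proj (G x) = g (proj x)) -> 0 < d <= 1/4 ->
  (forall s, cdist (f s) (g s) < d) -> exists m : Z, forall x, Rabs (G x - IZR m - F x) < d.
Proof.
  intros HF HG Hf Hg Hd Hc.
  assert (P : forall x, exists z, Rabs (G x - F x - IZR z) < d).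
  { intros x. specialize (Hc (proj x)). rewrite <- Hf, <- Hg in Hc.
    destruct (cdist_small _ _ _ Hc) as [u [Eu Hu]].
    destruct (proj_eq_int u (G x) Eu) as [z1 Ez1].
    simpl in Hu. unfold frac_part in Hu.
    exists (- z1 - Int_part (F x))%Z. rewrite minus_IZR, opp_IZR.
    replace (G x - F x - (- IZR z1 - IZR (Int_part (F x)))) with (u - (F x - IZR (Int_part (F x)))) by lra.
    exact Hu. }
  destruct (P 0) as [m0 Hm0]. exists m0.
  set (dd := fun x => G x - IZR m0 - F x).
  assert (Cd : continuity dd).
  { unfold dd. apply ucont_continuity.
    replace (fun x => G x - IZR m0 - F x) with (fun x => 1 * G x + (-1) * (fun y => F y + IZR m0) x).
    apply ucont_lin. apply HG. apply (liftu_shift F (IZR m0) HF).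
    apply functional_extensionality; intros; ring. }
  assert (Q : forall x, exists z, Rabs (dd x - IZR z) < d).
  { intros x. destruct (P x) as [z Hz]. exists (z - m0)%Z. unfold dd. rewrite minus_IZR.
    replace (G x - IZR m0 - F x - (IZR z - IZR m0)) with (G x - F x - IZR z) by ring. auto. }
  assert (D0 : Rabs (dd 0) < d).
  { unfold dd. replace (G 0 - IZR m0 - F 0) with (G 0 - F 0 - IZR m0) by ring. auto. }
  intros x. change (Rabs (dd x) < d).
  assert (B : -1/2 < dd x < 1/2).
  { apply Rabs_def2 in D0. split.
    - destruct (Rle_or_lt (dd x) (-1/2)) as [h|h]; auto. exfalso.
      destruct (IVT2 (fun y => dd y - (-1/2)) 0 x) as [w Hw].
      + apply continuity_minus; auto. intros y; apply continuity_const; intros ? ?; reflexivity.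
      + nra.
      + destruct (Q w) as [zw Hzw]. apply Rabs_def2 in Hzw.
        assert (IZR (-1) < IZR zw) by (simpl; lra). assert (IZR zw < IZR 0) by (simpl; lra).
        apply lt_IZR in H; apply lt_IZR in H0. lia.
    - destruct (Rle_or_lt (1/2) (dd x)) as [h|h]; auto. exfalso.
      destruct (IVT2 (fun y => dd y - (1/2)) 0 x) as [w Hw].
      + apply continuity_minus; auto. intros y; apply continuity_const; intros ? ?; reflexivity.
      + nra.
      + destruct (Q w) as [zw Hzw]. apply Rabs_def2 in Hzw.
        assert (IZR 0 < IZR zw) by (simpl; lra). assert (IZR zw < IZR 1) by (simpl; lra).
        apply lt_IZR in H; apply lt_IZR in H0. lia. }
  destruct (Q x) as [z Hz]. apply Rabs_def2 in Hz.
  assert (IZR (-1) < IZR z) by (simpl; lra). assert (IZR z < IZR 1) by (simpl; lra).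
  apply lt_IZR in H; apply lt_IZR in H0. assert (z = 0%Z) by lia. subst z.
  simpl in Hz. apply Rabs_def1; lra.
Qed.

Definition Xn (n : nat) (g : S1 -> S1) : Prop := homeo_plus g /\ forall s, itr g n s = s.
Definition closeN (n : nat) (e : R) (f g : S1 -> S1) : Prop :=
  forall s j, (1 <= j < n)%nat -> cdist (itr f j s) (itr g j s) < e.

Lemma closeN_desc n e F L : liftu F -> liftu L ->
  (forall j x, (j <= n)%nat -> Rabs (itr L j x - itr F j x) < e) -> closeN n e (desc F) (desc L).
Proof.
  intros HF HL H s j Hj. rewrite !desc_itr by auto. apply desc_close.
  intros x. rewrite Rabs_minus_sym. apply H. lia.
Qed.

Lemma Xn_desc n H r (z : Z) : liftu H -> INR n * r = IZR z -> Xn n (desc (conjL H r)).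
Proof.
  intros HH Hz. split.
  - apply desc_homeo_plus, conjL_liftu; auto.
  - intros s. rewrite desc_itr by (apply conjL_liftu; auto).
    replace (itr (conjL H r) n) with (fun x => x + IZR z). apply desc_int_shift.
    apply functional_extensionality; intros x. rewrite itr_conjL by auto.
    rewrite Hz. rewrite <- transl_int by (apply HH). rewrite inv_l; auto.
Qed.

Lemma rot_lemma n F f : liftu F -> (forall x, proj (F x) = f (proj x)) -> (forall s, itr f n s = s) ->
  (forall x, itr F n x = x + itr F n 0) /\ exists z, itr F n 0 = IZR z.
Proof.
  intros HF Hp Hn.
  assert (Ef : f = desc F).
  { apply functional_extensionality; intros s. unfold desc. rewrite Hp, proj_val; reflexivity. }
  assert (I : forall x, exists z, itr F n x - x = IZR z).
  { intros x. apply proj_eq_int. rewrite <- desc_proj by (apply (liftu_itr F n HF)).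
    rewrite <- desc_itr by auto. rewrite <- Ef. apply Hn. }
  split.
  - intros x. pose proof (int_const (fun y => itr F n y - y)) as C.
    assert (continuity (fun y => itr F n y - y)).
    { apply ucont_continuity. replace (fun y => itr F n y - y) with (fun y => 1 * itr F n y + (-1) * (fun u => u) y).
      apply ucont_lin. apply (liftu_itr F n HF). apply ucont_id.
      apply functional_extensionality; intros; ring. }
    specialize (C H I x). simpl in C. lra.
  - destruct (I 0) as [z Hz]. exists z. lra.
Qed.

Lemma Zeq_close (a b : Z) : Rabs (IZR a - IZR b) < 1/2 -> a = b.
Proof.
  intros H. apply Rabs_def2 in H. rewrite <- minus_IZR in H. destruct H as [H1 H2].
  assert (IZR (a - b) < IZR 1) by (simpl; lra). assert (IZR (-1) < IZR (a - b)) by (simpl; lra).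
  apply lt_IZR in H; apply lt_IZR in H0. lia.
Qed.

Theorem component n f eps : (1 <= n)%nat -> Xn n f -> 0 < eps ->
  exists d (W : (S1 -> S1) -> Prop), 0 < d /\ W f /\
    (forall g, W g -> Xn n g) /\
    (forall g, W g -> closeN n eps f g) /\
    (forall g, Xn n g -> (forall s, cdist (f s) (g s) < d) -> W g) /\
    (forall g0 g1, W g0 -> W g1 -> exists gam : R -> (S1 -> S1),
        gam 0 = g0 /\ gam 1 = g1 /\ (forall t, 0 <= t <= 1 -> W (gam t)) /\
        (forall t, 0 <= t <= 1 -> forall e, 0 < e -> exists dd, 0 < dd /\
            forall s, 0 <= s <= 1 -> Rabs (s - t) < dd -> closeN n e (gam t) (gam s))).
Proof.
  intros Hn [[_ [F [Fc [Fi [Ft Fp]]]]] Hfn] Heps.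
  assert (HF : liftu F) by (apply liftu_of; auto).
  assert (Ef : f = desc F).
  { apply functional_extensionality; intros s. unfold desc. rewrite Fp, proj_val; reflexivity. }
  destruct (rot_lemma n F f HF Fp Hfn) as [Hk [zk Hzk]].
  set (k := itr F n 0) in *.
  set (r := k / INR n).
  assert (Hn' : 0 < INR n) by (apply lt_0_INR; lia).
  assert (Hr : INR n * r = IZR zk). { unfold r. rewrite <- Hzk. field. lra. }
  set (K := avg F n).
  assert (HK : liftu K) by (apply avg_liftu; auto).
  assert (Kfix : forall x, K (F x) = K x + r) by (intros; apply avg_fix; auto).
  assert (FK : forall x, conjL K r x = F x).
  { intros x. unfold conjL. rewrite <- Kfix. apply inv_l; auto. }
  destruct (itr_close_all F (proj1 HF) n eps Heps) as [drho [Hdrho Hrho]].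
  destruct (conjL_close K r HK drho Hdrho) as [eta [Heta Hc1]].
  destruct (itr_close F (proj1 HF) n (1/2)) as [da [Hda Ha]]; [lra|].
  destruct (Sm_close F (proj1 HF) n eta Heta) as [db [Hdb Hb]].
  exists (Rmin (Rmin da db) (1/4)).
  exists (fun g => exists H, liftu H /\ (forall x, Rabs (H x - K x) < eta) /\ g = desc (conjL H r)).
  assert (Hm1 : Rmin (Rmin da db) (1/4) <= da) by (eapply Rle_trans; apply Rmin_l).
  assert (Hm2 : Rmin (Rmin da db) (1/4) <= db) by (eapply Rle_trans; [apply Rmin_l| apply Rmin_r]).
  assert (Hm3 : Rmin (Rmin da db) (1/4) <= 1/4) by apply Rmin_r.
  assert (Hm0 : 0 < Rmin (Rmin da db) (1/4)) by (repeat apply Rmin_glb_lt; lra).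
  split; [exact Hm0|]. split; [|split; [|split; [|split]]].
  -
    exists K. split; [auto|]. split.
    + intros x; rewrite Rminus_diag, Rabs_R0; auto.
    + rewrite Ef. f_equal. apply functional_extensionality; intros; rewrite FK; auto.
  -
    intros g [H [HH [_ ->]]]. apply (Xn_desc n H r zk); auto.
  -
    intros g [H [HH [Hc ->]]]. rewrite Ef. apply closeN_desc; auto.
    + apply conjL_liftu; auto.
    + apply Hrho. intros x. rewrite <- FK. apply Hc1; auto.
  -
    intros g [[_ [G [Gc [Gi [Gt Gp]]]]] Hgn] Hcl.
    assert (HG : liftu G) by (apply liftu_of; auto).
    destruct (normalize F G f g _ HF HG Fp Gp (conj Hm0 Hm3) Hcl) as [m Hm].
    set (G' := fun x => G x - IZR m).
    assert (HG' : liftu G').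
    { unfold G'. replace (fun x => G x - IZR m) with (fun x => G x + (- IZR m)). apply liftu_shift; auto.
      apply functional_extensionality; intros; ring. }
    assert (G'p : forall x, proj (G' x) = g (proj x)).
    { intros x. unfold G'. rewrite <- Gp. replace (G x - IZR m) with (G x + IZR (- m)) by (rewrite opp_IZR; ring).
      apply proj_shift. }
    assert (Hcl' : forall x, Rabs (G' x - F x) < Rmin (Rmin da db) (1/4)) by (intros; apply Hm).
    destruct (rot_lemma n G' g HG' G'p Hgn) as [Hk' [zk' Hzk']].
    assert (Ek : itr G' n 0 = k).
    { assert (Rabs (itr G' n 0 - itr F n 0) < 1/2) by (apply Ha; intros x; eapply Rlt_le_trans; [apply Hcl'| auto]).
      fold k in H. rewrite Hzk', Hzk in H. apply Zeq_close in H. subst k. rewrite Hzk', Hzk, H; reflexivity. }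
    set (HG0 := avg G' n).
    assert (HHG : liftu HG0) by (apply avg_liftu; auto).
    assert (Gfix : forall x, HG0 (G' x) = HG0 x + r).
    { intros x. apply avg_fix; auto. intros y. rewrite Hk', Ek. reflexivity. }
    exists HG0. split; [auto|]. split.
    + intros x. unfold HG0, K, avg.
      assert (Rabs (Sm G' n x - Sm F n x) < eta) by (apply Hb; intros y; eapply Rlt_le_trans; [apply Hcl'| auto]).
      replace (Sm G' n x / INR n - Sm F n x / INR n) with ((Sm G' n x - Sm F n x) / INR n) by (field; lra).
      unfold Rdiv. rewrite Rabs_mult, Rabs_inv, (Rabs_right (INR n)) by lra.
      assert (1 <= INR n) by (apply (le_INR 1); lia).
      apply (Rmult_lt_reg_r (INR n)); [lra|]. rewrite Rmult_assoc, Rinv_l by lra.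
      pose proof (Rabs_pos (Sm G' n x - Sm F n x)). nra.
    + apply functional_extensionality; intros s.
      unfold desc at 1. replace (conjL HG0 r (proj1_sig s)) with (G' (proj1_sig s)).
      * rewrite G'p, proj_val; reflexivity.
      * unfold conjL. rewrite <- Gfix, inv_l; auto.
  -
    intros g0 g1 [H0 [HH0 [Hc0 ->]]] [H1 [HH1 [Hc1' ->]]].
    set (Ht := fun t x => (1 - t) * H0 x + t * H1 x).
    exists (fun t => desc (conjL (Ht t) r)).
    assert (E0 : Ht 0 = H0) by (apply functional_extensionality; intros; unfold Ht; ring).
    assert (E1 : Ht 1 = H1) by (apply functional_extensionality; intros; unfold Ht; ring).
    assert (HHt : forall t, 0 <= t <= 1 -> liftu (Ht t)) by (intros; apply liftu_lin; auto).
    split; [rewrite E0; auto|]. split; [rewrite E1; auto|]. split.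
    + intros t Htt. exists (Ht t). split; auto. split; auto.
      intros x. pose proof (Hc0 x) as A; pose proof (Hc1' x) as B.
      apply Rabs_def2 in A; apply Rabs_def2 in B. unfold Ht.
      replace ((1 - t) * H0 x + t * H1 x - K x) with ((1 - t) * (H0 x - K x) + t * (H1 x - K x)) by ring.
      assert ((1 - t) * (H0 x - K x) <= (1 - t) * eta) by (apply Rmult_le_compat_l; lra).
      assert (t * (H1 x - K x) <= t * eta) by (apply Rmult_le_compat_l; lra).
      assert ((1 - t) * (- eta) <= (1 - t) * (H0 x - K x)) by (apply Rmult_le_compat_l; lra).
      assert (t * (- eta) <= t * (H1 x - K x)) by (apply Rmult_le_compat_l; lra).
      destruct (Req_dec t 0) as [->|Ht0].
      * apply Rabs_def1; lra.
      * assert (t * (H1 x - K x) < t * eta) by (apply Rmult_lt_compat_l; lra).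
        assert (t * (- eta) < t * (H1 x - K x)) by (apply Rmult_lt_compat_l; lra).
        apply Rabs_def1; nra.
    + intros t Htt e He.
      set (Lt := conjL (Ht t) r).
      assert (HLt : liftu Lt) by (apply conjL_liftu; auto).
      destruct (itr_close_all Lt (proj1 HLt) n e He) as [rt [Hrt Hrt']].
      destruct (conjL_close (Ht t) r (HHt t Htt) rt Hrt) as [et [Het Het']].
      exists (et / (2 * eta + 1)). split. { apply Rdiv_lt_0_compat; lra. }
      intros s Hs Hst. apply closeN_desc; auto. apply conjL_liftu; auto.
      apply Hrt'. apply Het'; auto. intros x.
      unfold Ht. replace ((1 - s) * H0 x + s * H1 x - ((1 - t) * H0 x + t * H1 x)) with ((s - t) * (H1 x - H0 x)) by ring.
      rewrite Rabs_mult.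
      assert (Rabs (H1 x - H0 x) < 2 * eta).
      { pose proof (Hc0 x) as A; pose proof (Hc1' x) as B.
        apply Rabs_def2 in A; apply Rabs_def2 in B. apply Rabs_def1; lra. }
      assert (Rabs (s - t) * (2 * eta + 1) < et).
      { apply (Rmult_lt_compat_r (2 * eta + 1)) in Hst; [|lra].
        unfold Rdiv in Hst. rewrite Rmult_assoc, Rinv_l in Hst by lra. lra. }
      pose proof (Rabs_pos (s - t)). pose proof (Rabs_pos (H1 x - H0 x)). nra.
Qed.

Lemma in_Hom_Xn q : in_Hom q <-> Xn 2 (fst q) /\ Xn 3 (snd q).
Proof.
  unfold in_Hom, Xn, itr; simpl. tauto.
Qed.

Theorem proposition12p5 :
  forall (p : Rep) (N : Rep -> Prop),
    in_Hom p -> is_nbhd N p ->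
    exists V : Rep -> Prop,
      (forall q, V q -> in_Hom q) /\
      (forall q, V q -> N q) /\
      V p /\
      is_nbhd V p /\
      path_connected V.
Proof.
  intros p N Hp [e0 [He0 HN]].
  apply in_Hom_Xn in Hp as [Xa Xb].
  destruct (component 2 (fst p) e0 ltac:(lia) Xa He0) as [da [Wa [Hda [Wa0 [Wa1 [Wa2 [Wa3 Wa4]]]]]]].
  destruct (component 3 (snd p) e0 ltac:(lia) Xb He0) as [db [Wb [Hdb [Wb0 [Wb1 [Wb2 [Wb3 Wb4]]]]]]].
  exists (fun q => Wa (fst q) /\ Wb (snd q)).
  assert (VH : forall q, Wa (fst q) /\ Wb (snd q) -> in_Hom q).
  { intros q [A B]. apply in_Hom_Xn; auto. }
  split; [exact VH|]. split; [|split; [|split]].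
  - intros q [A B]. apply HN; [apply VH; auto|].
    intros x. split; [|split].
    + exact (Wa2 _ A x 1%nat ltac:(lia)).
    + exact (Wb2 _ B x 1%nat ltac:(lia)).
    + exact (Wb2 _ B x 2%nat ltac:(lia)).
  - split; auto.
  - exists (Rmin da db). split. { apply Rmin_glb_lt; auto. }
    intros q Hq Hn. apply in_Hom_Xn in Hq as [Qa Qb]. split.
    + apply Wa3; auto. intros s. destruct (Hn s) as [h _]. eapply Rlt_le_trans; [apply h| apply Rmin_l].
    + apply Wb3; auto. intros s. destruct (Hn s) as [_ [h _]]. eapply Rlt_le_trans; [apply h| apply Rmin_r].
  - intros p0 p1 [A0 B0] [A1 B1].
    destruct (Wa4 _ _ A0 A1) as [ga [ga0 [ga1 [gaW gaC]]]].
    destruct (Wb4 _ _ B0 B1) as [gb [gb0 [gb1 [gbW gbC]]]].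
    exists (fun t => (ga t, gb t)). split; [|split; [|split]].
    + intros t Ht eps Heps.
      destruct (gaC t Ht eps Heps) as [d1 [Hd1 H1]].
      destruct (gbC t Ht eps Heps) as [d2 [Hd2 H2]].
      exists (Rmin d1 d2). split. { apply Rmin_glb_lt; auto. }
      intros s Hs Hst x. simpl.
      assert (C1 := H1 s Hs (Rlt_le_trans _ _ _ Hst (Rmin_l _ _))).
      assert (C2 := H2 s Hs (Rlt_le_trans _ _ _ Hst (Rmin_r _ _))).
      split; [|split].
      * exact (C1 x 1%nat ltac:(lia)).
      * exact (C2 x 1%nat ltac:(lia)).
      * exact (C2 x 2%nat ltac:(lia)).
    + rewrite ga0, gb0. destruct p0; reflexivity.
    + rewrite ga1, gb1. destruct p1; reflexivity.
    + intros t Ht. simpl. split; auto.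
Qed.
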